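(* Let $p>3$ be prime, $t\in\{1,3,p,3p\}$, and $1\le r\le 3p-1$ with $\gcd(r,3p)=1$. Then \[\mathcal{S}(1,r,t)=\begin{cases}0 & \text{if } r\equiv1\pmod3,\\ |r|_p-1 & \text{if } r\equiv 2\pmod 3\text{ and } |r|_p\text{ is odd},\\ \frac{|r|_p}{2} & \text{if } r\equiv2\pmod 3\text{ and }|r|_p\text{ is even}.\end{cases}\]
   Context: $|r|_m$ is the multiplicative order of $r$ modulo $m$ (with $|r|_1=1$). $S_k(x):=1+x+\cdots+x^{k-1}$, $S_0:=0$. For $m\ge1$ with $\gcd(r,m)=1$, $\kappa(m,r,t):=\dfrac{m|r|_m}{\gcd(m,\,tS_{|r|_m}(r))}$. For $d\in\{1,3,p,3p\}$, $\Lambda(d,r,t):=\{\ell>0:\ \ell \text{ divides } \frac{|r|_{3p}}{\gcd(\kappa(d,r,t),|r|_{3p})}\text{ and }\gcd(r^{\ell\kappa(d,r,t)}-1,3p)=d\}$, and $\mathcal{S}(d,r,t):=\sum_{\ell\in\Lambda(d,r,t)} d\,\phi\!\left(\frac{|r|_{3p}}{\ell\gcd(\kappa(d,r,t),|r|_{3p})}\right)$, with $\phi$ Euler's function. *)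

(* Defs.v *)
From mathcomp Require Import all_boot.
Set Implicit Arguments. Unset Strict Implicit. Unset Printing Implicit Defensive.

(* |r|_m : multiplicative order of r modulo m, i.e. the least k >= 1 with
   r^k = 1 (mod m).  We search k in 1..m (when gcd(r,m)=1 and m >= 1 the
   order is <= totient m <= m, so the search always succeeds).  For m = 1
   this gives 1, matching the convention |r|_1 = 1. *)
Definition mord (m r : nat) : nat :=
  (find (fun k => r ^ k.+1 == 1 %[mod m]) (iota 0 m)).+1.

Definition Ssum (k x : nat) : nat := \sum_(i < k) x ^ i.

Definition kappa (m r t : nat) : nat :=
  m * mord m r %/ gcdn m (t * Ssum (mord m r) r).

Definition Nq (p d r t : nat) : nat :=
  mord (3 * p) r %/ gcdn (kappa d r t) (mord (3 * p) r).

Definition inLambda (p d r t l : nat) : bool :=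
  [&& 0 < l, l %| Nq p d r t & gcdn (r ^ (l * kappa d r t) - 1) (3 * p) == d].

Definition Scal (p d r t : nat) : nat :=
  \sum_(l <- divisors (Nq p d r t) | inLambda p d r t l)
     d * totient (mord (3 * p) r %/ (l * gcdn (kappa d r t) (mord (3 * p) r))).

(* Main.v *)
Require Import Defs.
From mathcomp Require Import all_boot all_solvable zify.

Lemma mord_mod m r : mord m (r %% m) = mord m r.
Proof. by rewrite /mord; congr S; apply: eq_find => k; rewrite /= modnXm. Qed.

Lemma mord_dvd m r k : 0 < m -> coprime r m ->
  (r ^ k == 1 %[mod m]) = (mord m r %| k).
Proof.
move=> m0 co.
set P := (fun k => r ^ k.+1 == 1 %[mod m]).
have hasP : has P (iota 0 m).
  apply/hasP; exists (totient m).-1.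
    rewrite mem_iota /= add0n prednK ?totient_gt0 //.
    rewrite totient_count_coprime.
    apply: (@leq_trans (\sum_(0 <= d < m) 1)).
      by apply: leq_sum => i _; apply: leq_b1.
    by rewrite sum_nat_const_nat muln1 subn0.
  by rewrite /P prednK ?totient_gt0 //; apply/eqP; apply: Euler_exp_totient.
have fm : find P (iota 0 m) < m by by rewrite -{2}(size_iota 0 m) -has_find.
have Hf : P (find P (iota 0 m)) by have := nth_find 0 hasP; rewrite nth_iota.
have Hb : forall i, i < find P (iota 0 m) -> ~~ P i.
  move=> i lti; have := before_find 0 lti; rewrite nth_iota ?(ltn_trans lti) //.
  by move=> ->.
rewrite /mord; set f := find P (iota 0 m); rewrite -/f in Hf Hb.
have Hk : r ^ k = r ^ (k %% f.+1) %[mod m].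
  have e : (r ^ f.+1) ^ (k %/ f.+1) %% m = 1 %% m.
    by rewrite -modnXm (eqP Hf) modnXm exp1n.
  by rewrite {1}(divn_eq k f.+1) mulnC expnD expnM -modnMml e modnMml mul1n.
rewrite /dvdn Hk; case: (k %% f.+1) (ltn_pmod k (ltn0Sn f)) => [|s] lts.
  by rewrite expn0 eqxx.
by rewrite (negbTE (Hb s lts : ~~ (r ^ s.+1 == 1 %[mod m]))) .
Qed.

Lemma sum_div n K (P : pred nat) F : 0 < n -> n < K ->
  \sum_(l <- divisors n | P l) F l = \sum_(0 <= l < K | (l %| n) && P l) F l.
Proof.
move=> n0 nK; rewrite -big_filter -[RHS]big_filter; apply: perm_big.
apply: uniq_perm; rewrite ?filter_uniq ?divisors_uniq ?iota_uniq // => l.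
rewrite !mem_filter mem_iota /= -dvdn_divisors //.
case dl: (l %| n); rewrite ?andbF ?andbT //=.
by rewrite add0n subn0 (leq_ltn_trans (dvdn_leq n0 dl) nK) andbT.
Qed.

Lemma divn_divn n a : 0 < n -> a %| n -> n %/ (n %/ a) = a.
Proof.
move=> n0 an; have a0 : 0 < a by case: a an => //; rewrite dvd0n => /eqP n00; rewrite n00 in n0.
rewrite -{1}(divnK an) mulKn // divn_gt0 //; exact: dvdn_leq.
Qed.

Lemma sum_tot_rev n : 0 < n -> \sum_(l <- divisors n) totient (n %/ l) = n.
Proof.
move=> n0.
have -> : \sum_(l <- divisors n) totient (n %/ l) = \sum_(l <- divisors n) totient l.
  rewrite -(big_map (divn n) xpredT totient); apply: perm_big.
  apply: uniq_perm; rewrite ?divisors_uniq //.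
    rewrite map_inj_in_uniq ?divisors_uniq // => a b.
    rewrite -!dvdn_divisors // => an bn e.
    by rewrite -(@divn_divn n a n0 an) e divn_divn.
  move=> x; apply/mapP/idP.
    by case=> a; rewrite -!dvdn_divisors // => an ->; apply: dvdn_div.
  rewrite -dvdn_divisors // => xn; exists (n %/ x); last by rewrite divn_divn.
  by rewrite -dvdn_divisors // dvdn_div.
rewrite (@sum_div n n.+1 xpredT totient n0 (ltnSn n)).
rewrite big_mkord -[RHS](sum_totient_dvd n); apply: eq_bigl => i; by rewrite andbT.
Qed.

Lemma sum_even o h : 0 < h -> o = 2 * h ->
  \sum_(l <- divisors o | ~~ odd l) totient (o %/ l) = h.
Proof.
move=> h0 oE; have o0 : 0 < o by rewrite oE muln_gt0 h0.
rewrite -big_filter.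
have -> : \sum_(l <- [seq l <- divisors o | ~~ odd l]) totient (o %/ l)
        = \sum_(l <- map (muln 2) (divisors h)) totient (o %/ l).
  apply: perm_big; apply: uniq_perm.
  - by rewrite filter_uniq ?divisors_uniq.
  - by rewrite map_inj_uniq ?divisors_uniq //; by move=> a b /eqP; rewrite eqn_pmul2l // => /eqP.
  move=> x; rewrite mem_filter -dvdn_divisors //; apply/andP/mapP.
    case=> ex xo; have x2 : 2 %| x by rewrite dvdn2.
    have xe : 2 * (x %/ 2) = x by rewrite mulnC divnK.
    exists (x %/ 2) => //.
    by rewrite -dvdn_divisors // -(@dvdn_pmul2l 2) // xe -oE.
  case=> y; rewrite -dvdn_divisors // => yh ->; split; first by rewrite oddM.
  by rewrite oE dvdn_pmul2l.
rewrite big_map -[RHS](@sum_tot_rev h h0); apply: eq_bigr => l _.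
by rewrite oE divnMl.
Qed.

Theorem lemma5p8 (p t r : nat) :
  prime p -> 3 < p ->
  t \in [:: 1; 3; p; 3 * p] ->
  1 <= r <= 3 * p - 1 -> coprime r (3 * p) ->
  [/\ r = 1 %[mod 3] -> Scal p 1 r t = 0,
      r = 2 %[mod 3] -> odd (mord p r) -> Scal p 1 r t = mord p r - 1
    & r = 2 %[mod 3] -> ~~ odd (mord p r) -> Scal p 1 r t = mord p r %/ 2].
Proof.
move=> pp p3 _ /andP[r1 _] co.
have p0 : 0 < p := prime_gt0 pp.
have p30 : 0 < 3 * p by rewrite muln_gt0 p0.
have /andP[co3 cop] : coprime r 3 && coprime r p by rewrite -coprimeMr.
have c3p : coprime 3 p.
  rewrite prime_coprime // dvdn_prime2 //; apply/eqP => e; by rewrite -e in p3.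
have k1 : kappa 1 r t = 1 by rewrite /kappa /mord /= !modn1 /= gcd1n.
have N0 : 0 < mord (3 * p) r by [].
have Ndvd : forall k, (mord (3 * p) r %| k) = (mord 3 r %| k) && (mord p r %| k).
  by move=> k; rewrite -mord_dvd // chinese_remainder // !mord_dvd.
have NL : mord (3 * p) r = lcmn (mord 3 r) (mord p r).
  apply/eqP; rewrite eqn_dvd Ndvd dvdn_lcml dvdn_lcmr dvdn_lcm -Ndvd dvdnn //.
have Lam : forall l, inLambda p 1 r t l =
   [&& 0 < l, l %| mord (3 * p) r & ~~ (mord 3 r %| l) && ~~ (mord p r %| l)].
  move=> l; rewrite /inLambda /Nq k1 gcd1n divn1 muln1.
  change (gcdn (r ^ l - 1) (3 * p) == 1) with (coprime (r ^ l - 1) (3 * p)).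
  rewrite coprimeMr coprime_sym prime_coprime // [coprime _ p]coprime_sym.
  rewrite prime_coprime // -!eqn_mod_dvd ?expn_gt0 ?r1 // !mord_dvd //.
have scal : Scal p 1 r t = \sum_(l <- divisors (mord (3 * p) r) | inLambda p 1 r t l)
                               totient (mord (3 * p) r %/ l).
  by rewrite /Scal /Nq k1 gcd1n divn1; apply: eq_bigr => l _; rewrite mul1n muln1.
split.
- move=> r31; have m3 : mord 3 r = 1 by rewrite -mord_mod r31.
  by rewrite scal big_pred0 // => l; rewrite Lam m3 dvd1n /= !andbF.
- move=> r32 oo; have m3 : mord 3 r = 2 by rewrite -mord_mod r32.
  set o := mord p r in oo Lam NL Ndvd *.
  have o0 : 0 < o by [].
  have c2o : coprime 2 o by rewrite coprime2n.
  have NE : mord (3 * p) r = 2 * o by rewrite NL m3 /lcmn (eqP c2o) divn1.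
  have fodd : forall l, l %| o -> odd l.
    move=> l lo; apply: contraTT oo; rewrite -!dvdn2 => l2.
    exact: dvdn_trans l2 lo.
  set X := \sum_(l <- divisors o | l != o) totient (o %/ l).
  have E : o = 1 + X.
    rewrite -{1}(@sum_tot_rev o o0) (bigD1_seq o) ?divisors_id ?divisors_uniq //.
    by rewrite divnn o0.
  suff -> : Scal p 1 r t = X by rewrite {1}E add1n subn1.
  rewrite scal NE /X (@sum_div (2 * o) (2 * o).+1) ?muln_gt0 //.
  rewrite (@sum_div o (2 * o).+1) //; last by rewrite ltnS leq_pmull.
  apply: eq_big => l.
    rewrite Lam m3 NE dvdn2 negbK.
    case ol: (odd l); last first.
      by rewrite !andbF /=; case lo: (l %| o) => //; rewrite fodd in ol.
    rewrite Gauss_dvdr ?coprimen2 //=.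
    case lo: (l %| o) => //=; rewrite (dvdn_gt0 o0 lo) /=.
    by rewrite eqn_dvd lo.
  rewrite Lam m3 NE => /andP[_ /and3P[_ l2o /andP[ol _]]].
  have lo : l %| o by move: l2o; rewrite Gauss_dvdr // coprimen2 -[odd l]negbK -dvdn2.
  by rewrite -muln_divA // totient_coprime ?coprime2n ?fodd ?dvdn_div // mul1n.
- move=> r32 oe; have m3 : mord 3 r = 2 by rewrite -mord_mod r32.
  set o := mord p r in oe Lam NL Ndvd *.
  have o0 : 0 < o by [].
  have o2 : 2 %| o by rewrite dvdn2.
  have NE : mord (3 * p) r = o by rewrite NL m3; apply/lcmn_idPr.
  have [h oE] : exists h, o = 2 * h by exists (o %/ 2); rewrite mulnC divnK.
  have h0 : 0 < h by move: o0; rewrite oE muln_gt0.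
  have T := @sum_tot_rev o o0.
  rewrite (bigID odd) /= (@sum_even o h h0 oE) in T.
  suff -> : Scal p 1 r t = \sum_(l <- divisors o | odd l) totient (o %/ l).
    rewrite oE mulKn //; move: T; rewrite -oE; lia.
  rewrite scal NE big_seq_cond [RHS]big_seq_cond; apply: eq_bigl => l.
  rewrite -dvdn_divisors // Lam m3 NE dvdn2 negbK.
  case lo: (l %| o) => //=; rewrite (dvdn_gt0 o0 lo) /=.
  case ol: (odd l) => //=; apply/negP => ol'.
  by move: ol; rewrite -[odd l]negbK -dvdn2 (dvdn_trans o2 ol').
Qed.
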